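(* Consider the multi-level, single-user caching problem described in the context, with $L$ levels, level $i$ having $N_i$ files and $K_i$ users, and cache memory $M\ge 0$. Let \[ H'=\{h\in\{1,\dots,L\}: M<N_h/K_h\},\qquad I'=\{1,\dots,L\}\setminus H'. \] Then the rate \[ R^{\mathrm{SU}}(M)=\sum_{h\in H'}K_h+\max\Big\{\frac{\sum_{i\in I'}N_i}{M}-1,\;0\Big\} \] is achievable (the second term being $0$ when $I'=\emptyset$).
   Context: Multi-level, single-user caching problem. A server holds $\sum_{i=1}^L N_i$ files of $F$ bits each, partitioned into $L$ popularity levels, level $i$ containing $N_i$ files. There are $K=\sum_{i=1}^L K_i$ caches (each $K_i\ge1$), each able to store $MF$ bits, and exactly one user connected to each cache. In a placement phase, before requests are known, arbitrary functions of the files are stored in the caches. In the delivery phase, exactly $K_i$ of the $K$ users request a file from level $i$, for each $i$; which users these are is not known in advance, and each such user may request any file of level $i$. The server sends one broadcast of $RF$ bits heard by all users, and each user must recover its requested file from the broadcast and its cache. A pair $(R,M)$ is achievable if there is a placement-and-delivery strategy with cache memory $M$ that, for every admissible assignment of users to levels and every admissible choice of requested files, uses a broadcast of rate at most $R$ satisfying all requests (with vanishing error probability as $F\to\infty$). Standing assumption: $N_i\ge K_i$ for every level $i$. *)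

(* Defs.v *)
From HB Require Import structures.
From mathcomp Require Import all_boot all_order all_algebra.
From mathcomp Require Import reals.
Set Implicit Arguments. Unset Strict Implicit. Unset Printing Implicit Defensive.
Import Order.TTheory GRing.Theory Num.Theory.
Local Open Scope ring_scope.

Definition file_idx (L : nat) (N : 'I_L -> nat) : finType :=
  {i : 'I_L & 'I_(N i)}.

Definition library (L : nat) (N : 'I_L -> nat) (F : nat) : finType :=
  {ffun file_idx N -> F.-tuple bool}.

Definition nusers (L : nat) (Ku : 'I_L -> nat) : nat := (\sum_(i < L) Ku i)%N.

Definition admissible_demand (L : nat) (N Ku : 'I_L -> nat)
    (d : 'I_(nusers Ku) -> file_idx N) : Prop :=
  forall i : 'I_L, #|[pred k | tag (d k) == i]| = Ku i.

(* Error probability (files i.i.d. uniform bits = uniform library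
   realization): fraction of realizations W for which some user fails. *)
Definition error_prob (R : realType) (L : nat) (N Ku : 'I_L -> nat) (F c b : nat)
    (d : 'I_(nusers Ku) -> file_idx N)
    (cache : 'I_(nusers Ku) -> library N F -> c.-tuple bool)
    (enc : library N F -> b.-tuple bool)
    (dec : 'I_(nusers Ku) -> b.-tuple bool -> c.-tuple bool -> F.-tuple bool) : R :=
  (#|[pred W : library N F |
       [exists k, dec k (enc W) (cache k W) != W (d k)]]|)%:R
  / (#|library N F|)%:R.

Definition achievable (R : realType) (L : nat) (N Ku : 'I_L -> nat)
    (M Rt : R) : Prop :=
  forall eps : R, 0 < eps ->
  exists F0 : nat, forall F : nat, (F0 <= F)%N ->
  exists cache : 'I_(nusers Ku) -> library N F ->
                 (Num.truncn (M * F%:R)).-tuple bool,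
  forall d : 'I_(nusers Ku) -> file_idx N, admissible_demand d ->
  exists (enc : library N F -> (Num.truncn ((Rt + eps) * F%:R)).-tuple bool)
         (dec : 'I_(nusers Ku) -> (Num.truncn ((Rt + eps) * F%:R)).-tuple bool ->
                (Num.truncn (M * F%:R)).-tuple bool -> F.-tuple bool),
    error_prob R d cache enc dec <= eps.

(* The rate R^SU(M): H' = {h | M < N_h/K_h}, I' = complement.
   When I' is empty the second term is max(0/M - 1, 0) = 0. *)
Definition R_SU (R : realType) (L : nat) (N Ku : 'I_L -> nat) (M : R) : R :=
  \sum_(h < L | M < (N h)%:R / (Ku h)%:R) (Ku h)%:R
  + Num.max ((\sum_(i < L | ~~ (M < (N i)%:R / (Ku i)%:R)) (N i)%:R) / M - 1) 0.

(* Main.v *)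
Require Import Defs.
From HB Require Import structures.
From mathcomp Require Import all_boot all_order all_algebra.
From mathcomp Require Import reals.
From mathcomp Require Import ring lra zify.
Import Order.TTheory GRing.Theory Num.Theory.

Definition pack (n : nat) (l : seq bool) : n.-tuple bool := [tuple nth false l i | i < n].

Lemma pack_inj (T : eqType) (s : seq T) (f g : T -> bool) n :
  (size s <= n)%N -> pack n (map f s) = pack n (map g s) ->
  forall x, x \in s -> f x = g x.
Proof.
move=> hs he x xs.
have hi : (index x s < n)%N by apply: leq_trans hs; rewrite index_mem.
have := congr1 (fun t : n.-tuple bool => tnth t (Ordinal hi)) he.
rewrite !tnth_mktuple /= !(nth_map x) ?index_mem // nth_index //.
Qed.

Definition asz (t a1 a2 s : nat) : nat := ((s == t) * a1 + (s == t.+1) * a2)%N.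
Definition bsz (t a1 a2 s : nat) : nat := ((s == t.+1) * a1 + (s == t.+2) * a2)%N.
Definition msz (a1 a2 : nat) := (a1 + a2).+1.
Definition Pos (K m : nat) := ({set 'I_K} * 'I_m)%type.

Definition validX K t a1 a2 : pred (Pos K (msz a1 a2)) :=
  fun p => (p.2 < asz t a1 a2 #|p.1|)%N.
Definition rk K t a1 a2 (p : Pos K (msz a1 a2)) : nat := index p (enum (validX K t a1 a2)).
Definition bit L (N : 'I_L -> nat) F K t a1 a2 (W : library N F) (f : file_idx N)
  (p : Pos K (msz a1 a2)) := nth false (W f) (rk K t a1 a2 p).

Definition cachePred L (N : 'I_L -> nat) (P : pred 'I_L) K t a1 a2 (k : 'I_K)
  : pred (file_idx N * Pos K (msz a1 a2)) :=
  fun q => [&& ~~ P (tag q.1), k \in q.2.1 & validX K t a1 a2 q.2].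

Definition cacheF L (N : 'I_L -> nat) (P : pred 'I_L) F K t a1 a2 c (k : 'I_K)
  (W : library N F) : c.-tuple bool :=
  pack c (map (fun q => bit L N F K t a1 a2 W q.1 q.2) (enum (cachePred L N P K t a1 a2 k))).

Definition xorbit L (N : 'I_L -> nat) (P : pred 'I_L) F K t a1 a2 (W : library N F)
  (d : 'I_K -> file_idx N) (U : {set 'I_K}) (j : 'I_(msz a1 a2)) : bool :=
  \big[addb/false]_(k in U | ~~ P (tag (d k))) bit L N F K t a1 a2 W (d k) (U :\ k, j).

Definition bpos1 L (N : 'I_L -> nat) (P : pred 'I_L) F K (d : 'I_K -> file_idx N) :=
  enum [pred q : 'I_K * 'I_F | P (tag (d q.1))].
Definition bpos2 K t a1 a2 :=
  enum [pred q : Pos K (msz a1 a2) | (q.2 < bsz t a1 a2 #|q.1|)%N].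

Definition bval L (N : 'I_L -> nat) (P : pred 'I_L) F K t a1 a2 (W : library N F)
  (d : 'I_K -> file_idx N) (z : ('I_K * 'I_F + Pos K (msz a1 a2))%type) : bool :=
  match z with
  | inl q => nth false (W (d q.1)) q.2
  | inr q => xorbit L N P F K t a1 a2 W d q.1 q.2
  end.

Definition bpos L (N : 'I_L -> nat) (P : pred 'I_L) F K t a1 a2 (d : 'I_K -> file_idx N) :=
  map inl (bpos1 L N P F K d) ++ map inr (bpos2 K t a1 a2).

Definition encF L (N : 'I_L -> nat) (P : pred 'I_L) F K t a1 a2 b
  (d : 'I_K -> file_idx N) (W : library N F) : b.-tuple bool :=
  pack b (map (bval L N P F K t a1 a2 W d) (bpos L N P F K t a1 a2 d)).

Lemma determ L (N : 'I_L -> nat) (P : pred 'I_L) F K t a1 a2 c b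
  (d : 'I_K -> file_idx N) (k : 'I_K) (W W' : library N F) :
  (F <= #|validX K t a1 a2|)%N ->
  (size (enum (cachePred L N P K t a1 a2 k)) <= c)%N ->
  (size (bpos L N P F K t a1 a2 d) <= b)%N ->
  encF L N P F K t a1 a2 b d W = encF L N P F K t a1 a2 b d W' ->
  cacheF L N P F K t a1 a2 c k W = cacheF L N P F K t a1 a2 c k W' ->
  W (d k) = W' (d k).
Proof.
move=> hF hc hb he hca.
have Hb := pack_inj _ _ _ _ _ hb he.
have Hc := pack_inj _ _ _ _ _ hc hca.
apply: eq_from_tnth => i.
rewrite !(tnth_nth false).
case: (boolP (P (tag (d k)))) => hP.
  have := Hb (inl (k, i)); rewrite /=; apply.
  by rewrite mem_cat map_f // mem_enum.
set X := validX K t a1 a2.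
have hi : (i < size (enum X))%N by rewrite -cardE; apply: leq_trans hF.
set p0 : Pos K (msz a1 a2) := (set0, ord0).
set p := nth p0 (enum X) i.
have hrk : rk K t a1 a2 p = i by rewrite /rk index_uniq // enum_uniq.
have pX : p \in X by rewrite -mem_enum mem_nth.
suff : bit L N F K t a1 a2 W (d k) p = bit L N F K t a1 a2 W' (d k) p by rewrite /bit hrk.
clearbody p; clear hrk; move: pX; case: p => S j pX.
case: (boolP (k \in S)) => kS.
  apply: (Hc (d k, (S, j))); rewrite mem_enum unfold_in /cachePred /=; apply/and3P; split => //.
pose U := k |: S.
have cU : #|U| = #|S|.+1 by rewrite cardsU1 kS.
have hz : (inr (U, j) : ('I_K * 'I_F + Pos K (msz a1 a2))%type) \in bpos L N P F K t a1 a2 d.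
  rewrite mem_cat; apply/orP; right.
  rewrite mem_map; last exact: inr_inj.
  rewrite mem_enum inE /= cU /bsz /=; exact: pX.
have := Hb _ hz; rewrite /= /xorbit.
rewrite (bigD1 k) ?hP ?setU11 //= (bigD1 k (P := fun x => (x \in U) && ~~ P (tag (d x)))) ?hP ?setU11 //=.
have -> : U :\ k = S by rewrite /U setU1K.
rewrite (eq_bigr (fun k' => bit L N F K t a1 a2 W' (d k') (U :\ k', j))).
  by move/addIb.
move=> k' /andP[/andP[k'U hk'] k'k].
apply: (Hc (d k', (U :\ k', j))).
rewrite mem_enum unfold_in /cachePred /=; apply/and3P; split => //.
  by rewrite !inE eq_sym k'k /= eqxx.
rewrite /validX /=; move: (cardsD1 k' U); rewrite k'U cU add1n => -[<-].
exact: pX.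
Qed.

Lemma card_lt_ord m n : (n <= m)%N -> \sum_(j < m | (j < n)%N) 1%N = n.
Proof.
move=> hnm; rewrite (eq_bigl (fun j : 'I_m => true && (j < n)%N)) //.
by rewrite (big_ord_narrow_cond hnm) /= big_const_ord iter_addn_0 mul1n.
Qed.

Lemma card_pairs K m (Q : pred {set 'I_K}) (h : nat -> nat) :
  (forall s, h s < m)%N ->
  #|[pred p : {set 'I_K} * 'I_m | Q p.1 && (p.2 < h #|p.1|)%N]| = \sum_(S | Q S) h #|S|.
Proof.
move=> hm; rewrite -sum1_card.
rewrite (eq_bigl (fun p : {set 'I_K} * 'I_m => Q p.1 && (p.2 < h #|p.1|)%N)) //.
rewrite -(pair_big_dep Q (fun S (j : 'I_m) => (j < h #|S|)%N) (fun _ _ => 1%N)) /=.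
apply: eq_bigr => S _; apply: card_lt_ord; exact: ltnW.
Qed.

Lemma sum_split2 K (Q : pred {set 'I_K}) t1 t2 a1 a2 :
  \sum_(S | Q S) ((#|S| == t1) * a1 + (#|S| == t2) * a2)%N =
  (a1 * #|[pred S | Q S && (#|S| == t1)]| + a2 * #|[pred S | Q S && (#|S| == t2)]|)%N.
Proof.
rewrite big_split /=; congr addn.
  rewrite -sum1_card big_distrr /= big_mkcondr /=; apply: eq_bigr => S _.
  by case: (_ == _); rewrite ?muln1 ?mul1n ?mul0n.
rewrite -sum1_card big_distrr /= big_mkcondr /=; apply: eq_bigr => S _.
by case: (_ == _); rewrite ?muln1 ?mul1n ?mul0n.
Qed.

Lemma card_size K s : #|[pred S : {set 'I_K} | true && (#|S| == s)]| = 'C(K, s).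
Proof.
rewrite -[in RHS](card_ord K) -card_draws; apply: eq_card => S; by rewrite inE /= inE.
Qed.

Lemma subsetC1E K (k : 'I_K) (A : {set 'I_K}) : (A \subset [set~ k]) = (k \notin A).
Proof.
apply/idP/idP => [/subsetP h|kA].
  by apply/negP => /h; rewrite setC11.
apply/subsetP => x xA; rewrite in_setC1; apply: contraNneq kA => <-; exact: xA.
Qed.

Lemma card_size_in K (k : 'I_K) s :
  #|[pred S : {set 'I_K} | (k \in S) && (#|S| == s)]| = ('C(K, s) - 'C(K.-1, s))%N.
Proof.
have h1 := card_size K s.
have h2 : #|[pred S : {set 'I_K} | (k \notin S) && (#|S| == s)]| = 'C(K.-1, s).
  rewrite -[in RHS](card_ord K) -(cardsC1 k) -cards_draws; apply: eq_card => S.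
  by rewrite !inE /= subsetC1E.
have : #|[pred S : {set 'I_K} | true && (#|S| == s)]| =
   (#|[pred S : {set 'I_K} | (k \in S) && (#|S| == s)]| + #|[pred S : {set 'I_K} | (k \notin S) && (#|S| == s)]|)%N.
  rewrite -(cardID [pred S : {set 'I_K} | k \in S]); congr addn; apply: eq_card => S;
  by rewrite !inE /= andbC.
by rewrite h1 h2 => ->; rewrite addnK.
Qed.

Lemma card_files L (N : 'I_L -> nat) (P : pred 'I_L) :
  #|[pred f : file_idx N | P (tag f)]| = (\sum_(i | P i) N i)%N.
Proof.
rewrite -sum1_card.
have -> : (\sum_(i | P i) N i)%N = \sum_(i | P i) \sum_(j : 'I_(N i) | true) 1%N.
  apply: eq_bigr => i _; by rewrite big_const_ord iter_addn_0 mul1n.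
rewrite (sig_big_dep P (fun i (j : 'I_(N i)) => true) (fun i j => 1%N)).
by apply: eq_bigl => f; rewrite andbT.
Qed.

Lemma card_validX K t a1 a2 :
  #|validX K t a1 a2| = (a1 * 'C(K, t) + a2 * 'C(K, t.+1))%N.
Proof.
have -> : #|validX K t a1 a2| = #|[pred p : {set 'I_K} * 'I_(msz a1 a2) | true && (p.2 < asz t a1 a2 #|p.1|)%N]|.
  by apply: eq_card.
rewrite (card_pairs _ _ (fun _ => true) (asz t a1 a2)); last by move=> s; rewrite /msz /asz ltnS; case: (_ == _); case: (_ == _); rewrite ?mul1n ?mul0n ?addn0 ?add0n ?leq_addr ?leq_addl.
by rewrite /asz sum_split2 !card_size.
Qed.

Lemma card_cache L (N : 'I_L -> nat) (P : pred 'I_L) K t a1 a2 (k : 'I_K) :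
  size (enum (cachePred L N P K t a1 a2 k)) =
  ((\sum_(i | ~~ P i) N i) * (a1 * ('C(K, t) - 'C(K.-1, t)) + a2 * ('C(K, t.+1) - 'C(K.-1, t.+1))))%N.
Proof.
rewrite -cardE.
have -> : #|cachePred L N P K t a1 a2 k| =
   #|[predX [pred f : file_idx N | ~~ P (tag f)] &
       [pred p : {set 'I_K} * 'I_(msz a1 a2) | (k \in p.1) && (p.2 < asz t a1 a2 #|p.1|)%N]]|.
  apply: eq_card => q; rewrite !inE unfold_in /cachePred /validX /=.
  by rewrite andbA.
rewrite cardX (card_files L N (fun i => ~~ P i)); congr muln.
rewrite (card_pairs _ _ (fun S => k \in S) (asz t a1 a2)); last by move=> s; rewrite /msz /asz ltnS; case: (_ == _); case: (_ == _); rewrite ?mul1n ?mul0n ?addn0 ?add0n ?leq_addr ?leq_addl.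
by rewrite /asz sum_split2 !card_size_in.
Qed.

Lemma card_bpos L (N : 'I_L -> nat) (P : pred 'I_L) F K t a1 a2 (d : 'I_K -> file_idx N) :
  size (bpos L N P F K t a1 a2 d) =
  (#|[pred k | P (tag (d k))]| * F + (a1 * 'C(K, t.+1) + a2 * 'C(K, t.+2)))%N.
Proof.
rewrite /bpos size_cat !size_map /bpos1 /bpos2 -!cardE.
congr addn.
  have -> : #|[pred q : 'I_K * 'I_F | P (tag (d q.1))]| = #|[predX [pred k | P (tag (d k))] & [pred j : 'I_F | true]]|.
    by apply: eq_card => q; rewrite !inE /= andbT.
  by rewrite cardX; congr muln; rewrite -[RHS](card_ord F); apply: eq_card.
have -> : #|[pred q : Pos K (msz a1 a2) | (q.2 < bsz t a1 a2 #|q.1|)%N]| =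
   #|[pred p : {set 'I_K} * 'I_(msz a1 a2) | true && (p.2 < bsz t a1 a2 #|p.1|)%N]|.
  by apply: eq_card.
rewrite (card_pairs _ _ (fun _ => true) (bsz t a1 a2)); last by move=> s; rewrite /msz /bsz ltnS; case: (_ == _); case: (_ == _); rewrite ?mul1n ?mul0n ?addn0 ?add0n ?leq_addr ?leq_addl.
by rewrite /bsz sum_split2 !card_size.
Qed.

Lemma card_Husers L (N Ku : 'I_L -> nat) (P : pred 'I_L) (d : 'I_(nusers Ku) -> file_idx N) :
  admissible_demand d ->
  #|[pred k | P (tag (d k))]| = (\sum_(i | P i) Ku i)%N.
Proof.
move=> hd; rewrite -sum1_card.
rewrite (partition_big (fun k => tag (d k)) P) /=; last by [].
apply: eq_bigr => i Pi; rewrite -(hd i) -sum1_card; apply: eq_bigl => k.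
rewrite !inE /=; case: eqP => [->|]; by rewrite ?Pi ?andbF.
Qed.

Local Open Scope ring_scope.

Lemma dec_exists (R : realType) (L : nat) (N Ku : 'I_L -> nat) (F c b : nat)
    (d : 'I_(nusers Ku) -> file_idx N)
    (cache : 'I_(nusers Ku) -> library N F -> c.-tuple bool)
    (enc : library N F -> b.-tuple bool) (eps : R) :
  0 < eps ->
  (forall k W W', enc W = enc W' -> cache k W = cache k W' -> W (d k) = W' (d k)) ->
  exists dec, error_prob R d cache enc dec <= eps.
Proof.
move=> he hdet.
exists (fun k bb cc => if [pick W | (enc W == bb) && (cache k W == cc)] is Some W
                      then W (d k) else [tuple false | _ < F]).
rewrite /error_prob.
have -> : #|[pred W : library N F | [exists k, (if [pick W0 | (enc W0 == enc W) && (cache k W0 == cache k W)] is Some W0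
                      then W0 (d k) else [tuple false | _ < F]) != W (d k)]]| = 0%N.
  apply: eq_card0 => W /=; apply/negbTE/existsPn => k.
  case: pickP => [W0 /andP[/eqP h1 /eqP h2]|/(_ W)]; last by rewrite !eqxx.
  by rewrite (hdet k W0 W h1 h2) eqxx.
by rewrite mul0r ltW.
Qed.


Lemma bin_diff K s : (K * ('C(K, s) - 'C(K.-1, s)) = s * 'C(K, s))%N.
Proof.
rewrite mulnBr mul_bin_down -mulnBl.
case: (leqP s K) => h; first by rewrite subKn.
by rewrite bin_small // !muln0.
Qed.

Lemma numeric_case1 (R : realType) (K T KH : nat) (M eps : R) :
  0 <= M -> 0 < eps -> T%:R <= M ->
  exists F0 : nat, forall F, (F0 <= F)%N -> exists t a1 a2 : nat,
   [/\ (F <= a1 * 'C(K, t) + a2 * 'C(K, t.+1))%N,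
       (T * (a1 * ('C(K, t) - 'C(K.-1, t)) + a2 * ('C(K, t.+1) - 'C(K.-1, t.+1)))
          <= Num.truncn (M * F%:R)%R)%N &
       (KH * F + (a1 * 'C(K, t.+1) + a2 * 'C(K, t.+2))
          <= Num.truncn ((KH%:R + Num.max (T%:R / M - 1) 0 + eps) * F%:R)%R)%N].
Proof.
move=> M0 e0 hTM; exists 0%N => F _; exists K, F, 0%N; split.
- by rewrite binn muln1 mul0n addn0.
- rewrite truncn_ge_nat; last by apply: mulr_ge0.
  rewrite mul0n addn0 binn.
  apply: (@le_trans _ _ (T * F)%:R).
    rewrite ler_nat leq_mul2l; apply/orP; right; rewrite mulnBr muln1; exact: leq_subr.
  by rewrite natrM ler_wpM2r.
- have hmax : 0 <= Num.max (T%:R / M - 1) 0 by rewrite le_max lexx orbT.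
  have hKH : 0 <= KH%:R :> R by rewrite ler0n.
  rewrite truncn_ge_nat; last by apply: mulr_ge0 => //; lra.
  rewrite bin_small // mul0n muln0 !addn0 natrM ler_wpM2r //; lra.
Qed.

Lemma key_ineq (R : realType) (K t u : R) :
  0 <= u -> u < 1 -> 0 <= t -> t + 1 <= K -> 0 < t + u ->
  (1 - u) * ((K - t) / (t + 1)) + u * ((K - t - 1) / (t + 2)) <= K / (t + u) - 1.
Proof.
move=> u0 u1 t0 tK z0.
have h1 : t + 1 != 0 by rewrite gt_eqF //; lra.
have h2 : t + 2 != 0 by rewrite gt_eqF //; lra.
have hz : t + u != 0 by rewrite gt_eqF.
rewrite -subr_ge0.
have -> : K / (t + u) - 1 - ((1 - u) * ((K - t) / (t + 1)) + u * ((K - t - 1) / (t + 2)))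
   = (K * (t + 1) * (t + 2) - (K + 1) * (t + 2 - u) * (t + u)) / ((t + u) * (t + 1) * (t + 2)).
  by field; rewrite h1 h2 hz.
apply: divr_ge0; last by apply: mulr_ge0; [apply: mulr_ge0|]; lra.
have -> : K * (t + 1) * (t + 2) - (K + 1) * (t + 2 - u) * (t + u) = (t + 1) * (K - t - 1) + (K + 1) * ((1 - u) * (1 - u)) by ring.
apply: addr_ge0; apply: mulr_ge0; try lra; nra.
Qed.

Lemma numeric_case2 (R : realType) (K T KH : nat) (M eps : R) :
  0 <= M -> 0 < eps -> T%:R <= M * K%:R -> M < T%:R ->
  exists F0 : nat, forall F, (F0 <= F)%N -> exists t a1 a2 : nat,
   [/\ (F <= a1 * 'C(K, t) + a2 * 'C(K, t.+1))%N,
       (T * (a1 * ('C(K, t) - 'C(K.-1, t)) + a2 * ('C(K, t.+1) - 'C(K.-1, t.+1)))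
          <= Num.truncn (M * F%:R)%R)%N &
       (KH * F + (a1 * 'C(K, t.+1) + a2 * 'C(K, t.+2))
          <= Num.truncn ((KH%:R + Num.max (T%:R / M - 1) 0 + eps) * F%:R)%R)%N].
Proof.
move=> M0 e0 hTK hMT.
have Mpos : 0 < M.
  rewrite lt_neqAle M0 andbT eq_sym; apply/eqP => hM.
  by move: hTK hMT; rewrite hM mul0r; lra.
have Tpos : 0 < T%:R :> R by lra.
have K1 : 1 < K%:R :> R.
  have : M * 1 < M * K%:R by lra.
  by rewrite ltr_pM2l.
set Kr := K%:R : R.
set Tr := T%:R : R.
set x := Kr * M / Tr.
have hx1 : 1 <= x by rewrite /x ler_pdivlMr // mul1r mulrC.
have hxK : x < Kr by rewrite /x ltr_pdivrMr // ltr_pM2l //; lra.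
have hTMx : Tr / M = Kr / x.
  rewrite /x; field; apply/andP; split; rewrite gt_eqF //; lra.
set dl := Num.min (1 / 2) (eps / (4 * Kr)).
have dl0 : 0 < dl by rewrite lt_min; apply/andP; split; [lra| apply: divr_gt0; lra].
have dl1 : dl <= 1 / 2 by rewrite ge_min lexx.
have dl2 : dl <= eps / (4 * Kr) by rewrite ge_min lexx orbT.
have dl3 : 4 * Kr * dl <= eps by rewrite -ler_pdivlMl //; lra.
set z := x - dl.
have z0 : 1 / 2 <= z by rewrite /z; lra.
have zK : z < Kr by rewrite /z; lra.
set t := Num.truncn z.
have /andP[tz zt] : t%:R <= z < t.+1%:R by apply: truncn_itv; lra.
have tK : (t < K)%N by rewrite -(ltr_nat R); apply: le_lt_trans tz zK.
set u := z - t%:R.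
have u0 : 0 <= u by rewrite /u subr_ge0.
have u1 : u < 1 by rewrite /u; move: zt; rewrite -natr1; lra.
set n1 := 'C(K, t). set n2 := 'C(K, t.+1).
have n1p : (0 < n1)%N by rewrite bin_gt0 ltnW.
have n2p : (0 < n2)%N by rewrite bin_gt0.
have n1r : 0 < n1%:R :> R by rewrite ltr0n.
have n2r : 0 < n2%:R :> R by rewrite ltr0n.
exists (Num.truncn (Kr * (n1 + n2)%:R / dl)).+1 => F hF.
have hFd : Kr * (n1 + n2)%:R <= dl * F%:R.
  have : (Num.truncn (Kr * (n1 + n2)%:R / dl) < F)%N by [].
  rewrite truncn_lt_nat; last by apply: divr_ge0; [apply: mulr_ge0|]; lra.
  rewrite ltr_pdivrMr // => h; rewrite [dl * _]mulrC; exact: ltW.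
set Fr := F%:R : R.
have F0 : 0 <= Fr by rewrite ler0n.
set a2 := Num.truncn (u * Fr / n2%:R).
have ua : 0 <= u * Fr / n2%:R by apply: divr_ge0; [apply: mulr_ge0|]; lra.
have /andP[a2le a2gt] := truncn_itv ua.
set a1 := ((F - n2 * a2) %/ n1).+1.
exists t, a1, a2.
have y2le : (a2 * n2)%:R <= u * Fr by rewrite natrM -ler_pdivlMr.
have y2gt : u * Fr - n2%:R < (a2 * n2)%:R.
  move: a2gt; rewrite ltr_pdivrMr // -natrM mulSn natrD; lra.
have y2F : (a2 * n2 <= F)%N by rewrite -(ler_nat R); apply: (le_trans y2le); rewrite -[X in _ <= X]mul1r ler_wpM2r //; lra.
have hA : (F <= a1 * n1 + a2 * n2)%N.
  have h := ltn_ceil (F - n2 * a2) n1p.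
  have y2F' : (n2 * a2 <= F)%N by rewrite mulnC.
  rewrite -{1}(subnK y2F') (mulnC a2 n2) leq_add2r; exact: ltnW.
have y1le : (a1 * n1 <= F - a2 * n2 + n1)%N.
  rewrite /a1 mulSn addnC mulnC (mulnC a2 n2) leq_add2r mulnC; exact: leq_divM.
have y1r : (a1 * n1)%:R <= Fr - (a2 * n2)%:R + n1%:R.
  by move: y1le; rewrite -(ler_nat R) natrD natrB.
split.
- by rewrite -/n1 -/n2.
- rewrite truncn_ge_nat; last by apply: mulr_ge0.
  set Cn := (T * _)%N.
  have hC : (K * Cn = T * (t * (a1 * n1) + t.+1 * (a2 * n2)))%N.
    rewrite /Cn mulnCA mulnDr !mulnA !(mulnC K) -!mulnA !bin_diff -/n1 -/n2.
    by rewrite !mulnA !(mulnC a1) !(mulnC a2).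
  have hCr : Kr * Cn%:R = Tr * (t%:R * (a1 * n1)%:R + t.+1%:R * (a2 * n2)%:R).
    by rewrite /Kr /Tr -!natrM -natrD -natrM hC.
  rewrite -(ler_pM2l (_ : 0 < Kr)); last lra.
  rewrite hCr.
  have -> : Kr * (M * Fr) = Tr * (x * Fr) by rewrite /x; field; rewrite gt_eqF.
  rewrite ler_pM2l //.
  have e1 : t%:R * ((a1 * n1)%:R + (a2 * n2)%:R) <= t%:R * (Fr + n1%:R).
    by apply: ler_wpM2l; [rewrite ler0n| lra].
  have e2 : t%:R * n1%:R <= Kr * (n1 + n2)%:R.
    by rewrite -!natrM ler_nat leq_mul // ?leq_addr // ltnW.
  have e3 : u * Fr + t%:R * Fr = (x - dl) * Fr by rewrite /u /z; ring.
  rewrite (_ : t.+1%:R = t%:R + 1 :> R); last by rewrite -natr1.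
  lra.
- have hmax : Tr / M - 1 <= Num.max (Tr / M - 1) 0 by rewrite le_max lexx.
  have hKH : 0 <= KH%:R :> R by rewrite ler0n.
  have hmax0 : 0 <= Num.max (Tr / M - 1) 0 by rewrite le_max lexx orbT.
  rewrite truncn_ge_nat; last by apply: mulr_ge0 => //; lra.
  set tr := t%:R : R.
  have t0 : 0 <= tr by rewrite ler0n.
  have tK' : tr + 1 <= Kr by rewrite /tr /Kr natr1 ler_nat.
  set g1 := (Kr - tr) / (tr + 1).
  set g2 := (Kr - tr - 1) / (tr + 2).
  have hb1 : 'C(K, t.+1)%:R = g1 * n1%:R :> R.
    have := mul_bin_left K t; rewrite -/n1 => /(congr1 (fun n => n%:R : R)).
    rewrite !natrM natrB ?(ltnW tK) // -/Kr -/tr -natr1 -/tr /g1 => h.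
    apply: (mulfI (_ : tr + 1 != 0)); first by rewrite gt_eqF //; lra.
    rewrite h; field; rewrite gt_eqF //; lra.
  have hb2 : 'C(K, t.+2)%:R = g2 * n2%:R :> R.
    have := mul_bin_left K t.+1; rewrite -/n2 => /(congr1 (fun n => n%:R : R)).
    rewrite !natrM natrB // -/Kr -!natr1 -/tr /g2 => h.
    apply: (mulfI (_ : tr + 1 + 1 != 0)); first by rewrite gt_eqF //; lra.
    rewrite h; field; rewrite gt_eqF //; lra.
  have g1K : g1 <= Kr.
    rewrite /g1 ler_pdivrMr; last lra.
    nra.
  have g20 : 0 <= g2 by rewrite /g2; apply: divr_ge0; lra.
  have g10 : 0 <= g1 by rewrite /g1; apply: divr_ge0; lra.
  have g12 : g2 <= g1.
    rewrite /g1 /g2 ler_pdivrMr; last lra.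
    rewrite mulrAC ler_pdivlMr; last lra.
    nra.
  set y1 := (a1 * n1)%:R : R.
  set y2 := (a2 * n2)%:R : R.
  have hBn : (a1 * 'C(K, t.+1) + a2 * 'C(K, t.+2))%:R = g1 * y1 + g2 * y2.
    rewrite natrD !natrM hb1 hb2 /y1 /y2 !natrM; ring.
  have f1 : g1 * y1 <= g1 * (Fr - y2 + n1%:R) by apply: ler_wpM2l.
  have f2 : (g1 - g2) * (u * Fr - n2%:R) <= (g1 - g2) * y2.
    by apply: ler_wpM2l; [lra | apply: ltW].
  have z0' : 0 < tr + u by rewrite /u /tr; lra.
  have f3 := key_ineq _ Kr tr u u0 u1 t0 tK' z0'.
  have f4 : Fr * ((1 - u) * g1 + u * g2) <= Fr * (Kr / z - 1).
    have ztu : tr + u = z by rewrite /u /tr; ring.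
    by apply: ler_wpM2l => //; move: f3; rewrite ztu.
  have x0 : 0 < x by lra.
  have zpos : 0 < z by lra.
  have f5 : Kr / z <= Kr / x + 2 * Kr * dl.
    have e : Kr / z - Kr / x = Kr * dl / (x * z).
      rewrite /z; field; apply/andP; split; rewrite gt_eqF //; rewrite /z in zpos; lra.
    have xz : 1 / 2 <= x * z by nra.
    have : Kr * dl / (x * z) <= 2 * Kr * dl.
      rewrite ler_pdivrMr; last by apply: mulr_gt0.
      have kd : 0 <= Kr * dl by apply: mulr_ge0; lra.
      nra.
    lra.
  have f6 : Fr * (Kr / z) <= Fr * (Kr / x + 2 * Kr * dl) by apply: ler_wpM2l.
  have f7 : g1 * n1%:R + (g1 - g2) * n2%:R <= Kr * (n1 + n2)%:R.
    rewrite natrD.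
    have : g1 * n1%:R <= Kr * n1%:R by apply: ler_wpM2r; [rewrite ler0n|].
    have : (g1 - g2) * n2%:R <= Kr * n2%:R by apply: ler_wpM2r; [rewrite ler0n|lra].
    lra.
  have f8 : dl * Fr <= eps / 4 * Fr.
    apply: ler_wpM2r => //.
    have : dl * 1 <= dl * Kr by apply: ler_wpM2l; lra.
    by rewrite ler_pdivlMr; lra.
  have f9 : 2 * Kr * dl * Fr <= eps / 2 * Fr.
    apply: ler_wpM2r => //; lra.
  rewrite natrD natrM hBn -/Fr.
  rewrite hTMx in hmax.
  have f10 : Fr * (Kr / x - 1) <= Fr * Num.max (Kr / x - 1) 0 by apply: ler_wpM2l.
  have hFd' : Kr * (n1 + n2)%:R <= dl * Fr by [].
  have f11 : 0 <= eps * Fr by apply: mulr_ge0; lra.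
  rewrite hTMx.
  move: f1 f2 f4 f6 f7 f8 f9 f10 f11 hFd'.
  move: (Kr / x) (Kr / z) => a b.
  clear.
  move=> f1 f2 f4 f6 f7 f8 f9 f10 f11 hFd'.
  lra.
Qed.


Theorem theorem3 (R : realType) (L : nat) (N Ku : 'I_L -> nat) (M : R) :
  (forall i : 'I_L, (0 < Ku i)%N) ->
  (forall i : 'I_L, (Ku i <= N i)%N) ->
  0 <= M ->
  achievable N Ku M (R_SU N Ku M).
Proof.
move=> hK hKN M0 eps e0.
pose P : pred 'I_L := fun h => M < (N h)%:R / (Ku h)%:R.
pose T := (\sum_(i | ~~ P i) N i)%N.
pose KH := (\sum_(i | P i) Ku i)%N.
pose K := nusers Ku.
have hTK : T%:R <= M * K%:R.
  rewrite /T /K /nusers !natr_sum mulr_sumr.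
  apply: (@le_trans _ _ (\sum_(i | ~~ P i) M * (Ku i)%:R)).
    apply: ler_sum => i hi.
    have kp : 0 < (Ku i)%:R :> R by rewrite ltr0n.
    move: hi; rewrite /P -leNgt ler_pdivrMr // mulrC //.
  rewrite [X in _ <= X](bigID (fun i => ~~ P i)) /= lerDl.
  by apply: sumr_ge0 => i _; apply: mulr_ge0.
have Rsu : R_SU N Ku M = KH%:R + Num.max (T%:R / M - 1) 0.
  by rewrite /R_SU /T /KH !natr_sum.
have [F0 HF] : exists F0 : nat, forall F, (F0 <= F)%N -> exists t a1 a2 : nat,
   [/\ (F <= a1 * 'C(K, t) + a2 * 'C(K, t.+1))%N,
       (T * (a1 * ('C(K, t) - 'C(K.-1, t)) + a2 * ('C(K, t.+1) - 'C(K.-1, t.+1)))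
          <= Num.truncn (M * F%:R)%R)%N &
       (KH * F + (a1 * 'C(K, t.+1) + a2 * 'C(K, t.+2))
          <= Num.truncn ((KH%:R + Num.max (T%:R / M - 1) 0 + eps) * F%:R)%R)%N].
  case: (lerP T%:R M) => hTM.
    exact: numeric_case1.
  exact: numeric_case2.
exists F0 => F hF.
have [t [a1 [a2 [hA hB hC]]]] := HF F hF.
exists (cacheF L N P F K t a1 a2 (Num.truncn (M * F%:R))).
move=> d hd.
set b := Num.truncn ((R_SU N Ku M + eps) * F%:R).
have h1 : (F <= #|validX K t a1 a2|)%N by rewrite card_validX.
have h2 : forall k, (size (enum (cachePred L N P K t a1 a2 k)) <= Num.truncn (M * F%:R))%N.
  by move=> k; rewrite card_cache.
have h3 : (size (bpos L N P F K t a1 a2 d) <= b)%N.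
  by rewrite card_bpos card_Husers // /b Rsu.
have [dec hdec] := dec_exists R L N Ku F (Num.truncn (M * F%:R)) b d
   (cacheF L N P F K t a1 a2 (Num.truncn (M * F%:R)))
   (encF L N P F K t a1 a2 b d) eps e0
   (fun k W W' => determ L N P F K t a1 a2 _ b d k W W' h1 (h2 k) h3).
by exists (encF L N P F K t a1 a2 b d), dec.
Qed.
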